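(* Let $0<\tau<T$, let $\kappa_3,\kappa_T$ satisfy $0<\kappa_3<\kappa_T<1$, and let $t_3\in(\tau,T)$. Set \[ \lambda^{\star\star}(\kappa_3,\kappa_T,t_3):=\frac{\kappa_T-\kappa_3}{g_*(\kappa_3,\kappa_T)\int_{t_3}^{T}A^+(\xi,T)\,d\xi} \] and let $0<\gamma_3\le(\kappa_T-\kappa_3)/(T-t_3)$. Then for every $\lambda>\lambda^{\star\star}(\kappa_3,\kappa_T,t_3)$, the solution $(x(t),y(t))$ of \[ x'=y,\qquad y'=-\lambda a^+(t)g(x) \] with $x(T)=\kappa_T$, $y(T)=0$ satisfies $x(t_3)<\kappa_3$ and $y(t_3)>\gamma_3$.
   Context: $a\in L^1(\tau,T)$ with positive part $a^+$, and $A^+(t',t''):=\int_{t'}^{t''}a^+(\xi)\,d\xi$; it is assumed that $A^+(t,T)>0$ for all $t\in[\tau,T)$. $g\colon\mathbb{R}\to[0,+\infty)$ is the extension by zero outside $[0,1]$ of a locally Lipschitz continuous function $g\colon[0,1]\to[0,+\infty)$ with $g(0)=g(1)=0$, $g(s)>0$ for $0<s<1$ and $\lim_{s\to0^+}g(s)/s=0$. For $0\le\kappa'<\kappa''\le1$, $g_*(\kappa',\kappa''):=\min_{s\in[\kappa',\kappa'']}g(s)$. Solutions are in the Carathéodory sense on $[\tau,T]$. *)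

(* Defs.v *)
From HB Require Import structures.
From mathcomp Require Import all_boot all_order all_algebra.
From mathcomp Require Import all_classical all_reals all_analysis.
Set Implicit Arguments. Unset Strict Implicit. Unset Printing Implicit Defensive.
Import Order.TTheory GRing.Theory Num.Theory.
Import numFieldNormedType.Exports.
Local Open Scope classical_set_scope.
Local Open Scope ring_scope.

Definition ppart {R : realType} (a : R -> R) : R -> R := fun t => Num.max (a t) 0.

Definition Aplus {R : realType} (a : R -> R) (t1 t2 : R) : R :=
  (\int[lebesgue_measure]_(xi in `[t1, t2]) ppart a xi)%R.

(* g_*(k1,k2) = min_{s in [k1,k2]} g s  (the min exists for continuous g; we
   write it as the infimum of the image) *)
Definition gstar {R : realType} (g : R -> R) (k1 k2 : R) : R :=
  inf [set g s | s in `[k1, k2]].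

(* g : [0,1] -> [0,+oo) locally Lipschitz, extended by zero, g(0)=g(1)=0,
   g > 0 on (0,1), g(s)/s -> 0 as s -> 0+. *)
Definition admissible_g {R : realType} (g : R -> R) : Prop :=
  [/\ (forall s, 0 <= g s),
      (forall s, (s < 0 \/ 1 < s) -> g s = 0),
      (forall s, 0 <= s <= 1 -> exists2 d : R, 0 < d & exists L : R,
          forall u v, 0 <= u <= 1 -> 0 <= v <= 1 -> `|u - s| < d -> `|v - s| < d ->
            `|g u - g v| <= L * `|u - v|),
      (g 0 = 0 /\ g 1 = 0 /\ forall s, 0 < s < 1 -> 0 < g s) &
      ((fun s => g s / s) @ at_right 0 --> 0)].

(* Caratheodory solution on [tau, T] of x' = y, y' = - lam a^+(t) g(x),
   written in the equivalent integral form: x, y continuous on [tau,T]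
   (the integrands are then integrable, and x, y are absolutely continuous)
   and for every t in [tau,T]
     x(t) = x(T) - \int_t^T y,   y(t) = y(T) + \int_t^T lam a^+ g(x). *)
Definition cara_solution {R : realType} (tau T lam : R) (a g : R -> R)
  (x y : R -> R) : Prop :=
  [/\ {within `[tau, T], continuous x},
      {within `[tau, T], continuous y} &
      forall t, tau <= t <= T ->
        x t = x T - (\int[lebesgue_measure]_(s in `[t, T]) y s)%R /\
        y t = y T + (\int[lebesgue_measure]_(s in `[t, T]) (lam * ppart a s * g (x s)))%R].

(* Main.v *)
Require Import Defs.
From HB Require Import structures.
From mathcomp Require Import all_boot all_order all_algebra.
From mathcomp Require Import all_classical all_reals all_analysis.
From mathcomp Require Import lra.
From mathcomp Require Import measurable_realfun.
Import Order.TTheory GRing.Theory Num.Theory.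
Import numFieldNormedType.Exports.
Local Open Scope classical_set_scope.
Local Open Scope ring_scope.

Lemma g_loclip {R : realType} (g : R -> R) : admissible_g g ->
  forall s, exists2 d : R, 0 < d & exists L : R, forall u, `|u - s| < d ->
     `|g u - g s| <= L * `|u - s|.
Proof.
case=> g0 gout glip [g00 [g10 gpos]] _ s.
have [s0|s0] := ltP s 0.
  exists (- s); first by rewrite oppr_gt0.
  exists 0 => u hu; rewrite mul0r.
  have u0 : u < 0.
    move: hu; rewrite ltr_norml => /andP[_]; lra.
  by rewrite gout ?gout ?subrr ?normr0 //; left.
have [s1|s1] := ltP 1 s.
  exists (s - 1); first by rewrite subr_gt0.
  exists 0 => u hu; rewrite mul0r.
  have u1 : 1 < u.
    move: hu; rewrite ltr_norml => /andP[hu _]; lra.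
  by rewrite gout ?gout ?subrr ?normr0 //; right.
have [d d0 [L HL]] := glip s (andb_true_intro (conj s0 s1)).
exists d => //; exists `|L| => u hu.
have hs : 0 <= s <= 1 by rewrite s0 s1.
have hsd : `|s - s| < d by rewrite subrr normr0.
have LL : forall z : R, L * `|z| <= `|L| * `|z|.
  by move=> z; rewrite ler_wpM2r // ?normr_ge0 // ler_norm.
have [u0|u0] := ltP u 0.
  rewrite (gout u); last by left.
  have := HL 0 s _ hs _ hsd.
  rewrite g00 => H.
  have h1 : `|0 - s| <= `|u - s|.
    rewrite !ler0_norm ?subr_le0 //; lra.
  apply: (le_trans (H _ _)); first by rewrite lexx ler01.
  - move: hu; rewrite !ltr_norml => /andP[? ?]; apply/andP; split; lra.
  - apply: le_trans (LL _) _; rewrite ler_wpM2l //.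
have [u1|u1] := ltP 1 u.
  rewrite (gout u); last by right.
  have := HL 1 s _ hs _ hsd.
  rewrite g10 => H.
  have h1 : `|1 - s| <= `|u - s|.
    rewrite !ger0_norm ?subr_ge0 //; lra.
  apply: (le_trans (H _ _)); first by rewrite lexx ler01.
  - move: hu; rewrite !ltr_norml => /andP[? ?]; apply/andP; split; lra.
  - apply: le_trans (LL _) _; rewrite ler_wpM2l //.
apply: le_trans (LL _); apply: HL => //; by rewrite u0 u1.
Qed.
Lemma loclip_cont {R : realType} (g : R -> R) :
  (forall s, exists2 d : R, 0 < d & exists L : R, forall u, `|u - s| < d ->
     `|g u - g s| <= L * `|u - s|) -> continuous g.
Proof.
move=> H s; have [d d0 [L HL]] := H s.
apply/cvgrPdist_le => e e0.
have L1 : 0 < `|L| + 1 by rewrite ltr_wpDl.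
near=> u.
have hu : `|s - u| < Num.min d (e / (`|L| + 1)).
  near: u; have hm : 0 < Num.min d (e / (`|L| + 1)) by rewrite lt_min d0 /= divr_gt0.
  have := near_ball s _ hm; apply: filterS => v; rewrite /ball /=. by [].
move: hu; rewrite lt_min => /andP[hd he].
rewrite distrC; apply: le_trans (HL u _) _; first by rewrite distrC.
apply: le_trans (_ : `|L| * `|u - s| <= _).
  by rewrite ler_wpM2r // ?normr_ge0 // ler_norm.
rewrite distrC; apply: le_trans (_ : (`|L| + 1) * `|s - u| <= _).
  by rewrite ler_wpM2r // ?normr_ge0 // lerDl.
rewrite -ler_pdivlMl // mulrC; exact: ltW.
Unshelve. all: by end_near.
Qed.

Lemma Rint_sub {R : realType} d (X : measurableType d) (mu : {measure set X -> \bar R})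
  (D E : set X) (f : X -> R) :
  measurable D -> measurable E -> D `<=` E ->
  mu.-integrable E (EFin \o f) ->
  (forall x, E x -> 0 <= f x) ->
  (\int[mu]_(x in D) f x <= \int[mu]_(x in E) f x).
Proof.
move=> mD mE DE iE f0.
have iD := integrableS mE mD DE iE.
rewrite /Rintegral fine_le //; try exact: integrable_fin_num.
apply: ge0_subset_integral => //.
  exact: measurable_int iE.
Qed.

Lemma itv_sub {R : realType} (a b c d : R) : a <= c -> d <= b ->
  [set` `[c, d]] `<=` [set` `[a, b]].
Proof.
move=> ac db z /=; rewrite !in_itv /= => /andP[cz zd].
by rewrite (le_trans ac cz) (le_trans zd db).
Qed.

Lemma ar1 {R : realFieldType} (k A B : R) : B <= A -> 0 <= B -> k - A <= k - B <= k.
Proof. by move=> h1 h2; apply/andP; split; lra. Qed.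

Lemma ar2 {R : realFieldType} (k k3 A B : R) : B <= A ->
  k - k3 < B -> k3 <= k - A -> False.
Proof. by move=> *; lra. Qed.

Lemma ar3 {R : realFieldType} (k k3 A Y D G : R) : 0 < D ->
  k - A < k3 -> G <= (k - k3) / D -> A <= Y * D -> G < Y.
Proof.
move=> hD h1; rewrite ler_pdivlMr // => h2 h3.
rewrite -(ltr_pM2r hD); lra.
Qed.

Theorem lemma2p5 (R : realType) (tau T : R) (a g : R -> R)
  (htau : 0 < tau) (htauT : tau < T)
  (ha : lebesgue_measure.-integrable `[tau, T] (EFin \o a))
  (hA : forall t, tau <= t < T -> 0 < Aplus a t T)
  (hg : admissible_g g)
  (k3 kT t3 gam3 : R)
  (hk3 : 0 < k3) (hk3T : k3 < kT) (hkT : kT < 1)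
  (ht3 : tau < t3) (ht3T : t3 < T)
  (hgam0 : 0 < gam3) (hgam : gam3 <= (kT - k3) / (T - t3))
  (lam : R)
  (hlam : (kT - k3) / (gstar g k3 kT *
            (\int[lebesgue_measure]_(xi in `[t3, T]) Aplus a xi T)) < lam)
  (x y : R -> R)
  (hsol : cara_solution tau T lam a g x y)
  (hxT : x T = kT) (hyT : y T = 0) :
  x t3 < k3 /\ gam3 < y t3.
Proof.
case: hsol => cx cy hxy.
have gc : continuous g := @loclip_cont _ g (@g_loclip _ _ hg).
have g0 : forall s, 0 <= g s by case: hg.
set ap := ppart a.
have ap0 : forall t, 0 <= ap t by move=> t; rewrite /ap /ppart le_max lexx orbT.
have mitv : forall u v : R, @measurable _ (measurableTypeR R) [set` `[u, v]].
  by move=> u v; exact: measurable_itv.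
have iap : lebesgue_measure.-integrable `[tau, T] (EFin \o ap).
  have := integrable_funepos (mitv _ _) ha.
  apply: eq_integrable; first exact: mitv.
  by move=> t _; rewrite funeposE /= /ap /ppart EFin_max.
have iapS : forall u v, tau <= u -> v <= T -> lebesgue_measure.-integrable `[u, v] (EFin \o ap).
  by move=> u v hu hv; apply: integrableS iap => //; exact: itv_sub.
have [g0' gout _ [_ [_ gpos]] _] := hg.
have [c hc cmin] := EVT_min (ltW hk3T) (continuous_subspaceT gc).
have cin : 0 < c < 1.
  move: hc; rewrite in_itv /= => /andP[h1 h2]; apply/andP; split.
  - exact: lt_le_trans hk3 h1.
  - exact: le_lt_trans h2 hkT.
have gcpos : 0 < g c by apply: gpos.
set gs := gstar g k3 kT.
have gs_le : forall s, k3 <= s <= kT -> gs <= g s.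
  move=> s hs; apply: ge_inf.
    by exists 0 => _ [u _ <-]; exact: g0.
  by exists s => //=; rewrite in_itv /=.
have gs_ge : g c <= gs.
  apply: lb_le_inf.
    by exists (g k3), k3 => //=; rewrite in_itv /= lexx (ltW hk3T).
  by move=> _ [u hu <-]; exact: cmin.
have gspos : 0 < gs := lt_le_trans gcpos gs_ge.
have [cM _ cmax] := EVT_max (@ler01 R) (continuous_subspaceT gc).
have gbound : forall s, g s <= g cM.
  move=> s; have [s0|s0] := ltP s 0; first by rewrite gout ?g0 //; left.
  have [s1|s1] := ltP 1 s; first by rewrite gout ?g0 //; right.
  by apply: cmax; rewrite in_itv /= s0 s1.
pose Af xi := Aplus a xi T.
have Af_mono : forall u v, tau <= u -> u <= v -> Af v <= Af u.
  move=> u v hu huv; apply: Rint_sub => //.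
  - exact: itv_sub.
  - exact: iapS.
have Af0 : forall u, 0 <= Af u by move=> u; apply: Rintegral_ge0.
have mAf : measurable_fun `[t3, T] Af.
  have : measurable_fun `[t3, T] (fun xi => Af (Num.max xi tau)).
    apply: nonincreasing_measurable; first exact: mitv.
    move=> u v huv; apply: Af_mono; first by rewrite le_max lexx orbT.
    by rewrite ge_max !le_max huv lexx orbT.
  apply: eq_measurable_fun => u; rewrite inE /= in_itv /= => /andP[h1 _].
  by congr Af; apply/max_idPl; apply: le_trans (ltW ht3) h1.
have icst : forall (r u v : R), lebesgue_measure.-integrable `[u, v] (EFin \o (fun _ => r)).
  move=> r u v; apply: continuous_compact_integrable; first exact: segment_compact.
  by apply: continuous_subspaceT; exact: cst_continuous.
have iAf : lebesgue_measure.-integrable `[t3, T] (EFin \o Af).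
  apply: (le_integrable (mitv _ _) _ _ (icst (Af tau) t3 T)).
    exact/measurable_EFinP.
  move=> u; rewrite /= in_itv /= => /andP[h1 h2].
  rewrite lee_fin !ger0_norm ?Af0 //.
  by apply: Af_mono; [exact: lexx | exact: le_trans (ltW ht3) h1].
have Ipos : 0 < \int[lebesgue_measure]_(xi in `[t3, T]) Aplus a xi T.
  pose m := (t3 + T) / 2.
  have hm1 : t3 < m by rewrite /m; lra.
  have hm2 : m < T by rewrite /m; lra.
  have Afm : 0 < Af m by apply: hA; apply/andP; split; rewrite /m; lra.
  apply: (lt_le_trans _ (_ : \int[lebesgue_measure]_(xi in `[t3, m]) Af xi <= _)); last first.
    apply: Rint_sub; [exact: mitv | exact: mitv | | exact: iAf | ].
      by apply: itv_sub => //; exact: ltW.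
    by move=> *; exact: Af0.
  apply: (lt_le_trans _ (_ : \int[lebesgue_measure]_(xi in `[t3, m]) (Af m) <= _)).
    rewrite Rintegral_cst; last exact: mitv.
    have Em := lebesgue_measure_itv `[t3, m]; rewrite /= lte_fin hm1 -EFinD in Em.
    rewrite (_ : fine _ = m - t3); first by apply: mulr_gt0 => //; rewrite subr_gt0.
    exact: (congr1 fine Em).
  apply: le_Rintegral; [exact: mitv | exact: icst | | ].
    apply: integrableS iAf; [exact: mitv | exact: mitv | ].
    by apply: itv_sub => //; exact: ltW.
  move=> u; rewrite /= in_itv /= => /andP[h1 h2].
  by apply: Af_mono => //; lra.
set I := \int[lebesgue_measure]_(xi in `[t3, T]) Aplus a xi T.
have den : 0 < gs * I by apply: mulr_gt0.
have hlam' : kT - k3 < lam * (gs * I) by move: hlam; rewrite ltr_pdivrMr.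
have lampos : 0 < lam.
  by apply: lt_trans hlam; apply: divr_gt0 => //; rewrite subr_gt0.
pose F s := lam * ppart a s * g (x s).
have hy : forall t, tau <= t <= T -> y t = \int[lebesgue_measure]_(s in `[t, T]) F s.
  by move=> t ht; have [_ ->] := hxy t ht; rewrite hyT add0r.
have hx : forall t, tau <= t <= T -> x t = kT - \int[lebesgue_measure]_(s in `[t, T]) y s.
  by move=> t ht; have [-> _] := hxy t ht; rewrite hxT.
have iy : lebesgue_measure.-integrable `[tau, T] (EFin \o y).
  apply: continuous_compact_integrable; first exact: segment_compact.
  exact: cy.
have F0 : forall s, 0 <= F s.
  by move=> s; apply: mulr_ge0; [apply: mulr_ge0; [exact: ltW | exact: ap0] | exact: g0].
have mx : measurable_fun `[tau, T] x.
  exact: subspace_continuous_measurable_fun (mitv _ _) cx.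
have mF : measurable_fun `[tau, T] F.
  apply: measurable_funM.
    apply: measurable_funM; first exact: measurable_cst.
    have h1 := measurable_int _ iap. have h2 := (measurable_EFinP _ _).1 h1. exact: h2.
  exact: measurableT_comp (continuous_measurable_fun gc) mx.
have iF : lebesgue_measure.-integrable `[tau, T] (EFin \o F).
  apply: (le_integrable (mitv _ _) _ _ (integrableZl (mitv _ _) (lam * g cM) iap)).
    exact/measurable_EFinP.
  move=> s _ /=; rewrite lee_fin !ger0_norm ?F0 //; last first.
    by apply: mulr_ge0; [apply: mulr_ge0; [exact: ltW | exact: g0] | exact: ap0].
  rewrite /F [X in _ <= X]mulrAC; apply: ler_wpM2l; last exact: gbound.
  by apply: mulr_ge0; [exact: ltW | exact: ap0].
have iyS : forall u v, tau <= u -> v <= T -> lebesgue_measure.-integrable `[u, v] (EFin \o y).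
  by move=> u v hu hv; apply: integrableS iy => //; exact: itv_sub.
have iFS : forall u v, tau <= u -> v <= T -> lebesgue_measure.-integrable `[u, v] (EFin \o F).
  by move=> u v hu hv; apply: integrableS iF => //; exact: itv_sub.
have iZ : forall k u v, tau <= u -> v <= T ->
    lebesgue_measure.-integrable `[u, v] (EFin \o (fun s => k * ap s)).
  move=> k u v hu hv.
  apply: eq_integrable (integrableZl (mitv _ _) k (iapS u v hu hv)); first exact: mitv.
  by move=> s _; rewrite /= EFinM.
have y0 : forall t, tau <= t <= T -> 0 <= y t.
  by move=> t ht; rewrite hy //; apply: Rintegral_ge0 => s _; exact: F0.
have h3 : tau <= t3 <= T by rewrite (ltW ht3) (ltW ht3T).
have ymono : forall s, t3 <= s <= T -> y s <= y t3.
  move=> s /andP[h1 h2].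
  have hs : tau <= s <= T by rewrite h2 (le_trans (ltW ht3) h1).
  rewrite (hy s hs) (hy t3 h3).
  apply: Rint_sub; [exact: mitv | exact: mitv | exact: itv_sub | | by move=> *; exact: F0].
  exact: iFS (ltW ht3) (lexx T).
have ypos : forall s, t3 <= s <= T -> 0 <= y s.
  move=> s /andP[h1 h2]; apply: y0; by rewrite h2 (le_trans (ltW ht3) h1).
have xmono : forall s, t3 <= s <= T -> x t3 <= x s <= kT.
  move=> s /andP[h1 h2].
  have hs : tau <= s <= T by rewrite h2 (le_trans (ltW ht3) h1).
  have Hle : \int[lebesgue_measure]_(u in `[s, T]) y u <= \int[lebesgue_measure]_(u in `[t3, T]) y u.
    apply: Rint_sub; [exact: mitv | exact: mitv | exact: itv_sub | | ].
      exact: iyS (ltW ht3) (lexx T).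
    by move=> u; rewrite /= in_itv /= => hu; apply: ypos.
  have Hge : 0 <= \int[lebesgue_measure]_(u in `[s, T]) y u.
    apply: Rintegral_ge0 => u; rewrite /= in_itv /= => /andP[hu1 hu2].
    by apply: ypos; rewrite hu2 (le_trans h1 hu1).
  by rewrite (hx s hs) (hx t3 h3); apply: ar1.
have p1 : x t3 < k3.
  rewrite ltNge; apply/negP => hx3.
  have xin : forall s, t3 <= s <= T -> k3 <= x s <= kT.
    move=> s hs; have /andP[h1 h2] := xmono s hs.
    by rewrite h2 (le_trans hx3 h1).
  have ylow : forall s, t3 <= s <= T -> lam * gs * Af s <= y s.
    move=> s /andP[h1 h2].
    have hs : tau <= s <= T by rewrite h2 (le_trans (ltW ht3) h1).
    rewrite (hy s hs) /Af /Aplus -RintegralZl; [|exact: mitv|].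
    - apply: le_Rintegral; [exact: mitv| |exact: iFS (le_trans (ltW ht3) h1) (lexx T)|].
        exact: iZ (le_trans (ltW ht3) h1) (lexx T).
      move=> u; rewrite /= in_itv /= => /andP[hu1 hu2].
      rewrite /F [X in X <= _]mulrAC; apply: ler_wpM2l.
        by apply: mulr_ge0; [exact: ltW | exact: ap0].
      by apply: gs_le; apply: xin; rewrite hu2 (le_trans h1 hu1).
    - exact: iapS (le_trans (ltW ht3) h1) (lexx T).
  have HI : lam * gs * I <= \int[lebesgue_measure]_(u in `[t3, T]) y u.
    rewrite /I -RintegralZl; [|exact: mitv|exact: iAf].
    apply: le_Rintegral; [exact: mitv| |exact: iyS (ltW ht3) (lexx T)|].
      apply: eq_integrable (integrableZl (mitv _ _) (lam * gs) iAf); first exact: mitv.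
      by move=> u _; rewrite /= EFinM.
    by move=> u; rewrite /= in_itv /= => hu; apply: ylow.
  move: hlam' hx3; rewrite (hx t3 h3) mulrA; exact: ar2 HI.
have Hy : \int[lebesgue_measure]_(u in `[t3, T]) y u <= y t3 * (T - t3).
  apply: (le_trans (_ : _ <= \int[lebesgue_measure]_(u in `[t3, T]) (y t3))).
    apply: le_Rintegral; [exact: mitv|exact: iyS (ltW ht3) (lexx T)|exact: icst|].
    by move=> u; rewrite /= in_itv /= => hu; apply: ymono.
  rewrite Rintegral_cst; last exact: mitv.
  have Em := lebesgue_measure_itv `[t3, T]; rewrite /= lte_fin ht3T -EFinD in Em.
  by rewrite (_ : fine _ = T - t3) //; exact: (congr1 fine Em).
split => //.
rewrite (hx t3 h3) in p1.
have hD : 0 < T - t3 by rewrite subr_gt0.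
exact: (@ar3 _ _ _ _ _ _ _ hD p1 hgam Hy).
Qed.
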